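(* Let $n\in\mathbb{N}$ and let $a=3$ or $a>5$ (real). Let $E_n(a,1)$ be the $(n+1)\times n$ matrix whose $(i,j)$ entry is $-a$ if $i=j$, $1$ if $j=i+1$, $a$ if $i=j+1$, $-1$ if $i=j+2$, and $0$ otherwise, and let $B_n(a,1)$ be the $(n+3)\times n$ matrix whose first row is $(1,0,\dots,0)$, whose rows $2,\dots,n+2$ are the rows of $E_n(a,1)$ in order, and whose last row is $(0,\dots,0,-1)$. Then the columns of $B_n(a,1)$ are linearly independent, and every non-zero linear combination of these columns has at least $4$ non-zero entries. *)

(* Defs.v *)
From HB Require Import structures.
From mathcomp Require Import all_boot all_order all_algebra.
Set Implicit Arguments. Unset Strict Implicit. Unset Printing Implicit Defensive.
Import Order.TTheory GRing.Theory Num.Theory.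
Local Open Scope ring_scope.

(* Entry (i,j) of E_n(a,1), indices 0-based (the relations i=j, j=i+1, i=j+1,
   i=j+2 are invariant under the shift from 1-based indexing). *)
Definition E_entry (R : pzRingType) (a : R) (i j : nat) : R :=
  if i == j then - a
  else if j == i.+1 then 1
  else if i == j.+1 then a
  else if i == j.+2 then -1
  else 0.

Definition Emx (R : pzRingType) (n : nat) (a : R) : 'M[R]_(n.+1, n) :=
  \matrix_(i < n.+1, j < n) E_entry a i j.

Definition Bmx (R : pzRingType) (n : nat) (a : R) : 'M[R]_(n.+3, n) :=
  \matrix_(i < n.+3, j < n)
    if (i : nat) == 0%N then ((j : nat) == 0%N)%:R
    else if (i : nat) == n.+2 then - ((j : nat) == n.-1)%:R
    else Emx n a (inord i.-1) j.

(* Main.v *)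
Require Import Defs.
From HB Require Import structures.
From mathcomp Require Import all_boot all_order all_algebra.
From mathcomp Require Import ring lra zify.
Import Order.TTheory GRing.Theory Num.Theory.
Local Open Scope ring_scope.

Lemma grow (R : realFieldType) (b : R) (hb : 2 <= b) (V : nat -> R) (K : nat) :
  0 < V 0%N -> ((0 < K)%N -> b * V 0%N <= V 1%N) ->
  (forall j, (j.+2 <= K)%N -> b * V j.+1 - V j <= V j.+2) ->
  forall t, (t <= K)%N -> 0 < V t.
Proof.
move=> h0 h1 h2.
suff H : forall t, (t <= K)%N -> 0 < V t /\ ((0 < t)%N -> V t.-1 <= V t).
  by move=> t /H [].
elim=> [|t IH] Ht; first by split.
case: (IH (ltnW Ht)) => Hp Hm.
case: t IH Ht Hp Hm => [|t] _ Ht Hp Hm.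
  have := h1 Ht => h; split; [nra | move=> _ /=; nra].
have := h2 t Ht => h.
have Hm' := Hm isT; rewrite /= in Hm'.
split => [|_] /=; nra.
Qed.

Lemma fwd (R : realFieldType) (b : R) (hb : 2 <= b) (X : nat -> R) (e T : nat) :
  (forall k, (k < e.+3)%N -> X k = 0) -> 0 < X e.+3 ->
  (forall j, (e.+2 <= j <= T)%N -> 0 <= X j.+2 - b * X j.+1 + X j) ->
  forall k, (e.+3 <= k <= T.+2)%N -> 0 < X k.
Proof.
move=> hz hp hU k hk.
have -> : k = (e.+3 + (k - e.+3))%N by lia.
apply: (@grow R b hb (fun t => X (e.+3 + t)%N) (T.+2 - e.+3)); last by lia.
- by rewrite addn0.
- move=> HK; have := hU e.+2 ltac:(lia); rewrite (hz e.+2) // addn0 addn1.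
  move=> h; lra.
- move=> j Hj; have := hU (e.+3 + j)%N ltac:(lia); rewrite !addnS => h; lra.
Qed.

Lemma bwd (R : realFieldType) (b : R) (hb : 2 <= b) (X : nat -> R) (f L : nat) :
  (forall k, (f < k)%N -> X k = 0) -> X f < 0 ->
  (forall j, (L <= j)%N -> (j < f)%N -> X j.+2 - b * X j.+1 + X j <= 0) ->
  forall k, (L <= k <= f)%N -> X k < 0.
Proof.
move=> hz hn hU k hk.
have -> : k = (f - (f - k))%N by lia.
rewrite -oppr_gt0.
apply: (@grow R b hb (fun t => - X (f - t)%N) (f - L)); last by lia.
- by rewrite subn0 oppr_gt0.
- move=> HK; case: f hz hn hU hk HK => [|f] hz hn hU hk HK; first by lia.
  have := hU f ltac:(lia) ltac:(lia); rewrite (hz f.+2) // subn0 subSS subn0.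
  move=> h; lra.
- move=> j Hj; set i := (f - j.+2)%N.
  have e1 : (f - j = i.+2)%N by rewrite /i; lia.
  have e2 : (f - j.+1 = i.+1)%N by rewrite /i; lia.
  rewrite e1 e2; have := hU i ltac:(rewrite /i; lia) ltac:(rewrite /i; lia).
  move=> h; lra.
Qed.
Lemma card4 (T : finType) (S : {set T}) x1 x2 x3 x4 :
  x1 \in S -> x2 \in S -> x3 \in S -> x4 \in S -> uniq [:: x1; x2; x3; x4] ->
  (4 <= #|S|)%N.
Proof.
move=> h1 h2 h3 h4 hu; rewrite cardE.
have := uniq_leq_size hu (s2 := enum S); apply => x.
by rewrite !inE mem_enum => /or4P [] /eqP ->.
Qed.

Arguments card4 {T S x1 x2 x3 x4}.

Lemma const_int (R : realFieldType) (U W : nat -> R) p q :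
  (forall j, W j = U j.+1 - U j) -> (forall j, (p <= j < q)%N -> W j = 0) ->
  forall j, (p <= j <= q)%N -> U j = U p.
Proof.
move=> hWU hW; elim=> [|j IH] hj; first by have -> : p = 0%N by lia.
case: (leqP p j) => hpj; last by have -> : p = j.+1 by lia.
have := hW j ltac:(lia); rewrite hWU => h.
rewrite -IH; last by lia.
by apply/eqP; rewrite -subr_eq0 h.
Qed.

Lemma core_pos (R : realFieldType) (a : R) (ha : 3 <= a) (X : nat -> R) (N e : nat) :
  (forall k, (k < e.+3)%N -> X k = 0) -> 0 < X e.+3 -> (forall k, (N <= k)%N -> X k = 0) ->
  (4 <= #|[set i : 'I_N | (X i.+3 - a * X i.+2 + a * X i.+1 - X i != 0)%R]|)%N.
Proof.
move=> hz hp hN.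
pose b := a - 1.
have hb : 2 <= b by rewrite /b; lra.
have exP : exists k, X k != 0 by exists e.+3; rewrite gt_eqF.
have ubP : forall k, X k != 0 -> (k <= N)%N.
  move=> k; case: (leqP k N) => // /ltnW /hN ->; by rewrite eqxx.
case: (ex_maxnP exP ubP) => f Hf Hfmax'.
have Hfmax : forall k, (f < k)%N -> X k = 0.
  move=> k hk; apply/eqP; apply: contraTT hk => /Hfmax'; lia.
have hef : (e.+3 <= f)%N.
  case: (leqP e.+3 f) => // h; have := Hfmax _ h => h'; lra.
have hfN : (f < N)%N.
  case: (leqP N f) => // h; move: Hf; by rewrite hN ?eqxx.
pose W j := X j.+3 - a * X j.+2 + a * X j.+1 - X j.
pose U j := X j.+2 - b * X j.+1 + X j.
have WU : forall j, W j = U j.+1 - U j.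
    move=> j; rewrite /W /U /b.
  move: (X j.+3) (X j.+2) (X j.+1) (X j) => x3 x2 x1 x0; clear. ring.
have z2 : X e.+2 = 0 by apply: hz; lia.
have z1 : X e.+1 = 0 by apply: hz; lia.
have z0 : X e = 0 by apply: hz; lia.
have y3 : X f.+3 = 0 by apply: Hfmax; lia.
have y2 : X f.+2 = 0 by apply: Hfmax; lia.
have y1 : X f.+1 = 0 by apply: Hfmax; lia.
have We : W e = X e.+3 by rewrite /W /= z2 z1 z0; ring.
have Wf : W f = - X f by rewrite /W /= y3 y2 y1; ring.
have UE : U e.+1 = X e.+3 by rewrite /U /= z2 z1; ring.
have UF : U f = X f by rewrite /U /= y2 y1; ring.
have -> : [set i : 'I_N | (X i.+3 - a * X i.+2 + a * X i.+1 - X i != 0)%R]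
   = [set i : 'I_N | W i != 0] by apply/setP => i; rewrite !inE.
set S := [set i : 'I_N | W i != 0].
rewrite leqNgt; apply/negP => HS.
have he : (e < N)%N by lia.
pose i1 : 'I_N := Ordinal he.
pose i2 : 'I_N := Ordinal hfN.
have i1S : i1 \in S by rewrite inE /= We gt_eqF.
have i2S : i2 \in S by rewrite inE /= Wf oppr_eq0.
have no4 : forall x3 x4 : 'I_N, x3 \in S -> x4 \in S -> uniq [:: i1; i2; x3; x4] -> False.
  move=> x3 x4 h3 h4 hu; have := card4 i1S i2S h3 h4 hu; lia.
have hWN : forall j, (N <= j)%N -> W j = 0.
  move=> j hj; have h0 := hN j hj; have h1 := hN j.+1 ltac:(lia).
  have h2 := hN j.+2 ltac:(lia); have h3 := hN j.+3 ltac:(lia).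
  by rewrite /W /= h0 h1 h2 h3; ring.
have [m hm] : exists m : nat, forall j, j != e -> j != f -> j != m -> W j = 0.
  case: (pickP (fun k : 'I_N => (k \in S) && (k != i1) && (k != i2))) =>
     [m0 /andP[/andP[m0S m0i1] m0i2] | Hnone].
  - exists m0 => j hje hjf hjm.
    case: (leqP N j) => hjN; first exact: hWN.
    apply/eqP; apply: contraT => hWj; exfalso; apply: (no4 m0 (Ordinal hjN)) => //.
      by rewrite inE.
    move: m0i1 m0i2; rewrite /= !inE -!val_eqE /= => m0i1 m0i2.
    move: hje hjf hjm m0i1 m0i2; rewrite /=. lia.
  - exists e => j hje hjf _.
    case: (leqP N j) => hjN; first exact: hWN.
    have := Hnone (Ordinal hjN); rewrite /= inE -!val_eqE /= hje hjf !andbT.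
    by move/negbT; rewrite negbK => /eqP.
have A : forall j, (e.+1 <= j <= f)%N -> (j <= m)%N -> U j = X e.+3.
  move=> j hj hjm; rewrite -UE; apply: (@const_int R U W e.+1 j WU); last by lia.
  move=> j' hj'; apply: hm; apply/eqP; lia.
have B : forall j, (e.+1 <= j <= f)%N -> (m < j)%N -> U j = X f.
  move=> j hj hjm; rewrite -UF; symmetry; apply: (@const_int R U W j f WU); last by lia.
  move=> j' hj'; apply: hm; apply/eqP; lia.
have [hXf|hXf] : X f < 0 \/ 0 < X f by move: Hf; rewrite neq_lt => /orP[]; auto.
  case: (leqP m e) => hme.
    have := B e.+1 ltac:(lia) ltac:(lia); rewrite UE => h; lra.
  case: (leqP f m) => hfm.
    have := A f ltac:(lia) hfm; rewrite UF => h; lra.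
  have H1 : forall j, (e.+2 <= j <= m)%N -> 0 <= X j.+2 - b * X j.+1 + X j.
    move=> j hj; change (0 <= U j); rewrite (A j); first lra; lia.
  have H2 : forall j, (m.+1 <= j)%N -> (j < f)%N -> X j.+2 - b * X j.+1 + X j <= 0.
    move=> j hj hj'; change (U j <= 0); rewrite (B j); first lra; lia.
  have k1 := @fwd R b hb X e m hz hp H1 (maxn m.+1 e.+3) ltac:(lia).
  have k2 := @bwd R b hb X f m.+1 Hfmax hXf H2 (maxn m.+1 e.+3) ltac:(lia).
  lra.
have H1 : forall j, (e.+2 <= j <= f)%N -> 0 <= X j.+2 - b * X j.+1 + X j.
  move=> j hj; change (0 <= U j); case: (leqP j m) => hjm.
    rewrite (A j); first lra; lia.
  rewrite (B j); first lra; lia.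
have k1 := @fwd R b hb X e f hz hp H1 f.+1 ltac:(lia).
lra.
Qed.

Ltac decide_eqs := repeat match goal with |- context[(?x == ?y :> nat)] =>
  first [ rewrite (_ : (x == y) = false); last (by apply/eqP; lia)
        | rewrite (_ : (x == y) = true); last (by apply/eqP; lia) ] end.

Lemma Bentry (R : realFieldType) n (a : R) (i : 'I_n.+3) (j : 'I_n) :
  Bmx n a i j = (j.+3 == i.+3)%:R - a * (j.+3 == i.+2)%:R + a * (j.+3 == i.+1)%:R - (j.+3 == i)%:R.
Proof.
rewrite /Bmx mxE.
case: i => [i Hi]; case: j => [j Hj] /=.
case: i Hi => [|i] Hi /=.
  case: j Hj => [|j] Hj /=; rewrite ?eqxx /=; ring.
case: eqP => [Hin|Hin].
  have -> : i = n.+1 by lia.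
  case: n Hj Hi Hin => [|n] Hj Hi Hin; first by lia.
  rewrite /=; have [h1|h1] := eqVneq j n; decide_eqs; rewrite /=; ring.
rewrite /Emx mxE inordK; last by lia.
rewrite /E_entry /=.
have [h1|h1] := eqVneq i j; have [h2|h2] := eqVneq j i.+1;
have [h3|h3] := eqVneq i j.+1; have [h4|h4] := eqVneq i j.+2;
  first [exfalso; lia | decide_eqs; rewrite /=; ring].
Qed.

Definition Xv (R : realFieldType) n (v : 'cV[R]_n) (t : nat) : R :=
  \sum_(j < n) ((j.+3 == t)%:R * v j ord0).

Arguments Xv {R n} v t.

Lemma Bv (R : realFieldType) n (a : R) (v : 'cV[R]_n) (i : 'I_n.+3) :
  (Bmx n a *m v) i ord0 = Xv v i.+3 - a * Xv v i.+2 + a * Xv v i.+1 - Xv v i.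
Proof.
rewrite mxE /Xv.
under eq_bigr do rewrite Bentry !mulrDl !mulNr -!mulrA.
rewrite !big_split /= !sumrN -!mulr_sumr.
done.
Qed.

Lemma Xv_small (R : realFieldType) n (v : 'cV[R]_n) k : (k < 3)%N -> Xv v k = 0.
Proof.
move=> hk; rewrite /Xv big1 // => j _.
by rewrite (_ : (j.+3 == k) = false) ?mul0r //; apply/eqP; lia.
Qed.

Lemma Xv_big (R : realFieldType) n (v : 'cV[R]_n) k : (n.+3 <= k)%N -> Xv v k = 0.
Proof.
move=> hk; rewrite /Xv big1 // => j _.
have := ltn_ord j => hj.
by rewrite (_ : (j.+3 == k) = false) ?mul0r //; apply/eqP; lia.
Qed.

Lemma Xv_val (R : realFieldType) n (v : 'cV[R]_n) (j : 'I_n) : Xv v j.+3 = v j ord0.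
Proof.
rewrite /Xv (bigD1 j) //= eqxx mul1r big1 ?addr0 // => k hk.
by rewrite !eqSS (_ : (k == j :> nat) = false) ?mul0r //; apply/negbTE.
Qed.

Lemma core (R : realFieldType) (a : R) (ha : 3 <= a) (X : nat -> R) (N : nat) :
  (forall k, (k < 3)%N -> X k = 0) -> (forall k, (N <= k)%N -> X k = 0) ->
  (exists k, X k != 0) ->
  (4 <= #|[set i : 'I_N | (X i.+3 - a * X i.+2 + a * X i.+1 - X i != 0)%R]|)%N.
Proof.
move=> h3 hN exP.
case: (ex_minnP exP) => e3 He3 Hmin.
have Hz : forall k, (k < e3)%N -> X k = 0.
  move=> k hk; apply/eqP; apply: contraTT hk => /Hmin; lia.
have he3 : (3 <= e3)%N.
  case: (leqP 3 e3) => // h; move: He3; by rewrite h3 ?eqxx.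
have [e He] : exists e, e3 = e.+3 by exists (e3 - 3)%N; lia.
subst e3.
have [hneg|hpos] : X e.+3 < 0 \/ 0 < X e.+3 by move: He3; rewrite neq_lt => /orP[]; auto.
  have := @core_pos R a ha (fun k => - X k) N e _ _ _.
  have -> : [set i : 'I_N | (- X i.+3 - a * - X i.+2 + a * - X i.+1 - - X i != 0)%R]
     = [set i : 'I_N | (X i.+3 - a * X i.+2 + a * X i.+1 - X i != 0)%R].
    apply/setP => i; rewrite !inE -[in RHS]oppr_eq0; congr (_ != _); ring.
  apply.
  - by move=> k hk; rewrite Hz // oppr0.
  - by rewrite oppr_gt0.
  - by move=> k hk; rewrite hN // oppr0.
exact: (@core_pos R a ha X N e Hz hpos hN).
Qed.

Theorem corollary5p3 (R : realFieldType) (n : nat) (a : R)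
  (ha : a = 3 \/ 5 < a) :
  row_free (Bmx n a)^T /\
  (forall v : 'cV[R]_n, v != 0 ->
     leq 4 #|[set i : 'I_n.+3 | (Bmx n a *m v) i ord0 != 0]|).
Proof.
have ha3 : 3 <= a by case: ha => [->|h]; lra.
have P2 : forall v : 'cV[R]_n, v != 0 ->
     leq 4 #|[set i : 'I_n.+3 | (Bmx n a *m v) i ord0 != 0]|.
  move=> v hv.
  have -> : [set i : 'I_n.+3 | (Bmx n a *m v) i ord0 != 0] =
    [set i : 'I_n.+3 | (Xv v i.+3 - a * Xv v i.+2 + a * Xv v i.+1 - Xv v i != 0)%R].
    by apply/setP => i; rewrite !inE Bv.
  apply: core => //.
  - exact: Xv_small.
  - exact: Xv_big.
  - case: (pickP (fun j : 'I_n => v j ord0 != 0)) => [j Hj | Hnone].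
      by exists j.+3; rewrite Xv_val.
    exfalso; move/negP: hv; apply; apply/eqP/matrixP => i k.
    rewrite ord1 !mxE; have := Hnone i; by move/negbT; rewrite negbK => /eqP.
split => //.
rewrite -kermx_eq0; apply/eqP/row_matrixP => i; rewrite row0.
set r := row i _.
have hr : r *m (Bmx n a)^T = 0 by apply/sub_kermxP; exact: row_sub.
have hB : Bmx n a *m r^T = 0 by rewrite -[Bmx n a]trmxK -trmx_mul hr trmx0.
apply/eqP; apply: contraT => hr0.
have hrT : r^T != 0 by apply: contra hr0 => /eqP/(congr1 trmx); rewrite trmxK trmx0 => ->.
have := P2 _ hrT; rewrite hB.
have -> : [set i0 : 'I_n.+3 | (0 : 'cV[R]_n.+3) i0 ord0 != 0] = set0.
  by apply/setP => k; rewrite !inE mxE eqxx.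
by rewrite cards0.
Qed.
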